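(* Let $N\ge 2$, $\lambda\ne 0$, and for $x,p\in\mathbb{C}^N$ set $$L_k(x,p;\lambda)=I+\lambda^{-1}\begin{pmatrix}p_kx_k & -p_kx_k^2\\ p_k & -p_kx_k\end{pmatrix},\qquad T_N(x,p;\lambda)=L_N(x,p;\lambda)\cdots L_1(x,p;\lambda).$$ (a) Periodic case: if $\widetilde{x}\in\mathbb{C}^N$ satisfies $p_k=\frac{\lambda}{\widetilde{x}_k-x_k}+\frac{\lambda}{x_k-\widetilde{x}_{k-1}}$ for $k=1,\dots,N$ with $\widetilde x_0=\widetilde x_N$, $x_{N+1}=x_1$, then $$\frac{\prod_{k=1}^N(\widetilde{x}_k-x_{k+1})}{\prod_{k=1}^N(\widetilde{x}_k-x_k)}$$ is an eigenvalue of $T_N(x,p;\lambda)$. (b) Open-end case: if $\widetilde{x}\in\mathbb{C}^N$ satisfies $p_1=\frac{\lambda}{\widetilde{x}_1-x_1}$ and $p_k=\frac{\lambda}{\widetilde{x}_k-x_k}+\frac{\lambda}{x_k-\widetilde{x}_{k-1}}$ for $k=2,\dots,N$, then the $(2,1)$-entry of $T_N(x,p;\lambda)$ equals $$\frac{\prod_{k=1}^{N-1}(\widetilde{x}_k-x_{k+1})}{\prod_{k=1}^N(\widetilde{x}_k-x_k)}.$$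
   Context: $I$ is the $2\times2$ identity matrix. The relation between $(x,p)$ and $\widetilde x$ is the first half of the Bäcklund transformation $F_\lambda$ of the symmetric rational additive Toda-type system $\ddot x_k=-\dot x_k^2\big(\frac{1}{x_{k+1}-x_k}-\frac{1}{x_k-x_{k-1}}\big)$. *)

(* Defs.v *)
From HB Require Import structures.
From mathcomp Require Import all_boot all_order all_algebra.
From mathcomp Require Import reals.
From mathcomp.real_closed Require Import complex.
Set Implicit Arguments. Unset Strict Implicit. Unset Printing Implicit Defensive.
Import Order.TTheory GRing.Theory Num.Theory.
Local Open Scope ring_scope.

Definition mx2 {F : nzRingType} (a b c d : F) : 'M[F]_2 :=
  \matrix_(i < 2, j < 2)
    if i == 0 :> nat then (if j == 0 :> nat then a else b)
    else (if j == 0 :> nat then c else d).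

(* row/column index 1 and 2 of a 2x2 matrix (0-based ordinals 0 and 1) *)
Definition idx1 : 'I_2 := @Ordinal 2 0 isT.
Definition idx2 : 'I_2 := @Ordinal 2 1 isT.

(* Sequences x, p : C^N are modelled as functions nat -> C, read at 1..N. *)
Definition Lmat {F : fieldType} (x p : nat -> F) (lam : F) (k : nat) : 'M[F]_2 :=
  1%:M + lam^-1 *: mx2 (p k * x k) (- (p k * x k ^+ 2)) (p k) (- (p k * x k)).

Fixpoint Tmat {F : fieldType} (x p : nat -> F) (lam : F) (n : nat) : 'M[F]_2 :=
  match n with
  | 0 => 1%:M
  | m.+1 => Lmat x p lam m.+1 *m Tmat x p lam m
  end.

(* Main.v *)
Require Import Defs.
From HB Require Import structures.
From mathcomp Require Import all_boot all_order all_algebra.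
From mathcomp Require Import reals.
From mathcomp.real_closed Require Import complex.
From mathcomp Require Import ring.
Import Order.TTheory GRing.Theory Num.Theory.
Local Open Scope ring_scope.

Definition colv {F : fieldType} (a b : F) : 'cV[F]_2 :=
  \col_(i < 2) (if i == 0 :> nat then a else b).

Lemma Lcol {F : fieldType} (x p : nat -> F) lam k a c :
  Lmat x p lam k *m colv a c =
  colv ((1 + lam^-1 * (p k * x k)) * a + lam^-1 * (- (p k * x k ^+ 2)) * c)
       (lam^-1 * p k * a + (1 + lam^-1 * (- (p k * x k))) * c).
Proof.
apply/matrixP => i j; rewrite !mxE big_ord_recl big_ord1 !mxE /=.
case: i => [[|[|i]] Hi] //=; rewrite ?mxE /=; ring.
Qed.

Lemma step {F : fieldType} (x p : nat -> F) lam k a b :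
  lam != 0 -> b - x k != 0 -> x k - a != 0 ->
  p k = lam / (b - x k) + lam / (x k - a) ->
  (b - x k) *: (Lmat x p lam k *m colv a 1) = (a - x k) *: colv b 1.
Proof.
move=> l0 h1 h2 hp; rewrite Lcol hp; apply/matrixP => i j; rewrite !mxE.
case: i => [[|[|i]] Hi] //=; field; by rewrite ?h1 ?h2 ?l0.
Qed.

Lemma step1 {F : fieldType} (x p : nat -> F) lam k b :
  lam != 0 -> b - x k != 0 ->
  p k = lam / (b - x k) ->
  (b - x k) *: (Lmat x p lam k *m colv 1 0) = colv b 1.
Proof.
move=> l0 h1 hp; rewrite Lcol hp; apply/matrixP => i j; rewrite !mxE.
case: i => [[|[|i]] Hi] //=; field; by rewrite ?h1 ?l0.
Qed.

Lemma chain {F : fieldType} (x p : nat -> F) lam (v : nat -> 'cV[F]_2)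
  (num den : nat -> F) n :
  (forall k, (1 <= k <= n)%N -> den k *: (Lmat x p lam k *m v k.-1) = num k *: v k) ->
  (\prod_(1 <= k < n.+1) den k) *: (Tmat x p lam n *m v 0%N) =
  (\prod_(1 <= k < n.+1) num k) *: v n.
Proof.
elim: n => [|n IH] H.
  by rewrite !big_geq // !scale1r mul1mx.
rewrite !(big_nat_recr n.+1) //=.
have -> : (\prod_(1 <= i < n.+1) den i * den n.+1) *:
  (Lmat x p lam n.+1 *m Tmat x p lam n *m v 0%N) =
  den n.+1 *: (Lmat x p lam n.+1 *m ((\prod_(1 <= i < n.+1) den i) *: (Tmat x p lam n *m v 0%N))).
  by rewrite -scalemxAr scalerA mulrC mulmxA.
rewrite IH; last first.
  by move=> k /andP[k1 kn]; apply: H; rewrite k1 (leq_trans kn).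
rewrite -scalemxAr scalerA mulrC -[in RHS]scalerA -scalerA (H n.+1) ?leqnn //.
Qed.

Lemma eig_col {F : fieldType} n (T : 'M[F]_n) (v : 'cV[F]_n) mu :
  v != 0 -> T *m v = mu *: v -> eigenvalue T mu.
Proof.
move=> nz Tv.
have hA : (T - mu%:M) *m v = 0 by rewrite mulmxBl Tv mul_scalar_mx subrr.
have : \det (T - mu%:M)^T == 0.
  apply/det0P; exists v^T; first by rewrite trmx_eq0.
  by rewrite -trmx_mul hA trmx0.
rewrite det_tr => /det0P [w nw wA].
apply/eigenvalueP; exists w => //.
by apply/eqP; rewrite -subr_eq0 -mul_mx_scalar -mulmxBr wA.
Qed.

Lemma prod_nz {F : fieldType} (f : nat -> F) a b :
  (forall k, (a <= k < b)%N -> f k != 0) -> \prod_(a <= k < b) f k != 0.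
Proof.
move=> H; rewrite prodf_seq_neq0; apply/allP => k; rewrite mem_index_iota => hk.
exact: H.
Qed.

Lemma partB {F : fieldType} (N : nat) (lam : F) (x p xt : nat -> F) :
  (1 <= N)%N -> lam != 0 ->
     (forall k, (1 <= k <= N)%N -> xt k != x k) ->
     (forall k, (2 <= k <= N)%N -> x k != xt k.-1) ->
     p 1%N = lam / (xt 1%N - x 1%N) ->
     (forall k, (2 <= k <= N)%N ->
        p k = lam / (xt k - x k) + lam / (x k - xt k.-1)) ->
     Tmat x p lam N idx2 idx1 =
       (\prod_(1 <= k < N) (xt k - x k.+1)) /
       (\prod_(1 <= k < N.+1) (xt k - x k)).
Proof.
move=> N1 l0 hA hB hP1 hP.
pose v k := if k == 0%N then colv 1 0 else colv (xt k) 1.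
pose num k := if k == 1%N then 1 else xt k.-1 - x k.
have H := @chain F x p lam v num (fun k => xt k - x k) N.
have hd : \prod_(1 <= k < N.+1) (xt k - x k) != 0.
  by apply: prod_nz => k hk; rewrite subr_eq0 hA.
have E : (\prod_(1 <= k < N.+1) (xt k - x k)) *: (Tmat x p lam N *m v 0%N) =
  (\prod_(1 <= k < N.+1) num k) *: v N.
  apply: H => k /andP[k1 kN].
  case: k k1 kN => [//|[|k]] _ kN.
    rewrite /v /num /= scale1r; apply: step1 => //; by rewrite subr_eq0 hA.
  rewrite /v /num /=; apply: step => //.
  - by rewrite subr_eq0 hA // kN.
  - by rewrite subr_eq0 hB // kN.
  - by rewrite hP // kN.
have := congr1 (fun M : 'cV_2 => M idx2 0) E.
rewrite !mxE big_ord_recl big_ord1 !mxE /=.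
have vN : v N = colv (xt N) 1 by rewrite /v; case: N N1 {H hd E} hA hB hP.
rewrite vN !mxE /= mulr0 addr0 mulr1 => E2.
apply: (mulfI hd); rewrite (_ : idx1 = ord0); last exact: val_inj.
rewrite E2 [RHS]mulrC divfK //.
rewrite big_nat_recl //= /num /= mul1r.
rewrite mulr1; apply: eq_big_nat => k /andP[k1 _]; rewrite eqSS; case: k k1 => [|k] // _.
Qed.

Lemma partA {F : fieldType} (N : nat) (lam : F) (x p xt : nat -> F) :
  (2 <= N)%N -> lam != 0 ->
     let xtprev := fun k : nat => if k == 1%N then xt N else xt k.-1 in
     let xnext := fun k : nat => if k == N then x 1%N else x k.+1 in
     (forall k, (1 <= k <= N)%N -> xt k != x k) ->
     (forall k, (1 <= k <= N)%N -> x k != xtprev k) ->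
     (forall k, (1 <= k <= N)%N ->
        p k = lam / (xt k - x k) + lam / (x k - xtprev k)) ->
     eigenvalue (Tmat x p lam N)
       ((\prod_(1 <= k < N.+1) (xt k - xnext k)) /
        (\prod_(1 <= k < N.+1) (xt k - x k))).
Proof.
move=> N2 l0 xtprev xnext hA hB hP.
pose f k := if k == 0%N then xt N else xt k.
have fp : forall k, (1 <= k)%N -> xtprev k = f k.-1.
  by move=> [|[|k]] //.
pose v k := colv (f k) 1.
pose num k := f k.-1 - x k.
have H := @chain F x p lam v num (fun k => xt k - x k) N.
have hd : \prod_(1 <= k < N.+1) (xt k - x k) != 0.
  by apply: prod_nz => k hk; rewrite subr_eq0 hA.
have E : (\prod_(1 <= k < N.+1) (xt k - x k)) *: (Tmat x p lam N *m v 0%N) =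
  (\prod_(1 <= k < N.+1) num k) *: v N.
  apply: H => k /andP[k1 kN].
  have fk : f k = xt k by rewrite /f; case: k k1 {kN}.
  rewrite /v /num fk; apply: step => //.
  - by rewrite subr_eq0 hA // k1.
  - by rewrite -fp // subr_eq0 hB // k1.
  - by rewrite -fp // hP // k1.
have v0N : v N = v 0%N.
  by rewrite /v /f eqxx ifN // -lt0n (leq_trans _ N2).
rewrite v0N in E.
apply: (@eig_col _ _ _ (v 0%N)).
  apply/eqP => /matrixP /(_ idx2 0); rewrite !mxE /=; apply/eqP; exact: oner_neq0.
apply: (scalerI hd); rewrite E scalerA mulrC divfK //.
congr (_ *: _).
rewrite big_nat_recl ?(leq_trans _ N2) // big_nat_recr ?(ltnW N2) //=.
rewrite mulrC /num /f /= /xnext eqxx; congr (_ * _).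
apply: eq_big_nat => k /andP[k1 kN]; rewrite /= ifN.
  by rewrite ltn_eqF.
by rewrite -lt0n.
Qed.

Local Open Scope complex_scope.

Theorem theorem12 (R : realType) (N : nat) (lam : R[i]) :
  (2 <= N)%N -> lam != 0 ->
  (* (a) periodic case: xt_0 = xt_N, x_{N+1} = x_1 *)
  (forall x p xt : nat -> R[i],
     let xtprev := fun k : nat => if k == 1%N then xt N else xt k.-1 in
     let xnext := fun k : nat => if k == N then x 1%N else x k.+1 in
     (forall k, (1 <= k <= N)%N -> xt k != x k) ->
     (forall k, (1 <= k <= N)%N -> x k != xtprev k) ->
     (forall k, (1 <= k <= N)%N ->
        p k = lam / (xt k - x k) + lam / (x k - xtprev k)) ->
     eigenvalue (Tmat x p lam N)
       ((\prod_(1 <= k < N.+1) (xt k - xnext k)) /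
        (\prod_(1 <= k < N.+1) (xt k - x k)))) /\
  (* (b) open-end case *)
  (forall x p xt : nat -> R[i],
     (forall k, (1 <= k <= N)%N -> xt k != x k) ->
     (forall k, (2 <= k <= N)%N -> x k != xt k.-1) ->
     p 1%N = lam / (xt 1%N - x 1%N) ->
     (forall k, (2 <= k <= N)%N ->
        p k = lam / (xt k - x k) + lam / (x k - xt k.-1)) ->
     Tmat x p lam N idx2 idx1 =
       (\prod_(1 <= k < N) (xt k - x k.+1)) /
       (\prod_(1 <= k < N.+1) (xt k - x k))).
Proof.
move=> N2 l0; split.
  by move=> x p xt; apply: partA.
move=> x p xt; apply: partB => //; exact: leq_trans _ N2.
Qed.
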